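(* Let $G$ be a non-cyclic finite group of order $n$ and let $q$ be the smallest prime divisor of $n$. Then $$\psi(G)<\frac{1}{q-1}\,\psi(C_n).$$
   Context: For a finite group $G$, $\psi(G)=\sum_{g\in G} o(g)$ denotes the sum of the orders of all elements of $G$. $C_n$ denotes the cyclic group of order $n$. *)

(* Defs.v *)
From mathcomp Require Import all_boot all_order all_algebra all_fingroup all_solvable.
Set Implicit Arguments. Unset Strict Implicit. Unset Printing Implicit Defensive.

Definition psi (gT : finGroupType) (G : {set gT}) : nat := \sum_(x in G) #[x]%g.

(* The cyclic group C_n of order n, realized as the additive group Zp n
   inside 'Z_n (it has order n for every n >= 1). *)
Definition psiC (n : nat) : nat := psi (Zp n).

(* Main.v *)
Require Import Defs.
From mathcomp Require Import all_boot all_order all_algebra all_fingroup all_solvable.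
From mathcomp Require Import zify.
Set Implicit Arguments. Unset Strict Implicit. Unset Printing Implicit Defensive.
Import GroupScope.

Lemma psi_isog (gT rT : finGroupType) (G : {group gT}) (H : {group rT}) :
  G \isog H -> psi G = psi H.
Proof.
case/isogP=> f injf <-; rewrite /psi morphimEdom big_imset /=.
  by apply: eq_bigr => x Gx; rewrite order_injm.
by move=> x y Gx Gy; apply: (injmP injf).
Qed.

Lemma Zp_cyc n : cyclic (Zp n).
Proof.
rewrite /Zp; case: ifP => _; last exact: cyclic1.
by rewrite Zp_cycle cycle_cyclic.
Qed.

Lemma psi_cyclic (gT : finGroupType) (G : {group gT}) :
  cyclic G -> psi G = psiC #|G|.
Proof.
move=> cG; rewrite /psiC; apply: psi_isog.
have n0 : 0 < #|G| by rewrite cardG_gt0.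
by rewrite isog_cyclic_card // Zp_cyc card_Zp //=.
Qed.

Lemma psi_sub (gT : finGroupType) (H G : {set gT}) : H \subset G -> psi H <= psi G.
Proof.
move=> sHG; rewrite /psi [X in _ <= X](bigID (mem H)) /=.
apply: leq_trans (leq_addr _ _); apply: eq_leq; apply: eq_bigl => x.
by apply/idP/andP => [Hx|[]//]; split=> //; apply: (subsetP sHG).
Qed.

Lemma psi_le_sq (gT : finGroupType) (G : {group gT}) : psi G <= #|G| * #|G|.
Proof.
rewrite /psi -sum_nat_const leq_sum // => x Gx.
by apply: dvdn_leq; [exact: cardG_gt0 | exact: order_dvdG].
Qed.

Lemma psi_gen (gT : finGroupType) (G : {group gT}) :
  cyclic G -> 1 < #|G| -> #|G| * totient #|G| < psi G.
Proof.
case/cyclicP=> a ->{G}; rewrite -orderE => lt1.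
rewrite totient_gen /psi (bigID (mem [set x | generator <[a]> x])) /=.
rewrite -addn1 leq_add //.
  rewrite mulnC -sum_nat_const; apply: eq_leq; apply: eq_big => x.
    rewrite !inE; apply/idP/andP => [gx|[]//]; split=> //.
    by move: gx => /eqP ->; exact: cycle_id.
  by rewrite inE => /eqP gx; rewrite !orderE gx.
rewrite (bigD1 1) /= ?group1 ?inE //=; last first.
  by apply/eqP => h; move: lt1; rewrite orderE h cycle1 cards1.
by rewrite order1 leq_addr.
Qed.

Lemma constt_mem (gT : finGroupType) (G : {group gT}) x (pi : nat_pred) :
  x \in G -> x.`_pi \in G.
Proof. by move=> Gx; apply: (subsetP _ _ (cycle_constt pi x)); rewrite cycle_subG. Qed.

Lemma pelt_p'elt_1 (gT : finGroupType) (p : nat) (y : gT) :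
  p.-elt y -> p^'.-elt y -> y = 1.
Proof. by move=> py /constt1P; rewrite constt_p_elt. Qed.

Lemma coset_p' (gT : finGroupType) (G P : {group gT}) (p : nat) g :
  p.-Sylow(G) P -> P <| G -> g \in G -> coset P g = coset P g.`_p^'.
Proof.
move=> sylP nPG Gg; have nP := normal_norm nPG.
have gpP : g.`_p \in P by rewrite (mem_normal_Hall sylP nPG) ?constt_mem ?p_elt_constt.
have Ng : forall x, x \in G -> x \in 'N(P) by move=> x Gx; rewrite (subsetP nP).
rewrite -[in LHS](consttC p g) morphM ?Ng ?constt_mem // /= (coset_id gpP) mul1g.
by []. Qed.

Lemma order_coset_p' (gT : finGroupType) (G P : {group gT}) (p : nat) h :
  p.-Sylow(G) P -> P <| G -> h \in G -> p^'.-elt h -> #[coset P h] = #[h].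
Proof.
move=> sylP nPG Gh ph; have nP := normal_norm nPG.
have Nh : h \in 'N(P) by rewrite (subsetP nP).
apply/eqP; rewrite eqn_dvd morph_order //=.
have hk : h ^+ #[coset P h] \in P.
  by apply: coset_idr; rewrite ?groupX // morphX // expg_order.
rewrite order_dvdn; apply/eqP; apply: (@pelt_p'elt_1 _ p).
  exact: mem_p_elt (pHall_pgroup sylP) hk.
exact: p_eltX.
Qed.

Lemma order_split (gT : finGroupType) (G P : {group gT}) (p : nat) g :
  p.-Sylow(G) P -> P <| G -> g \in G -> #[g] = (#[g.`_p] * #[coset P g])%N.
Proof.
move=> sylP nPG Gg; rewrite (coset_p' sylP nPG Gg) (order_coset_p' sylP nPG).
- by rewrite !order_constt partnC.
- exact: constt_mem.
exact: p_elt_constt.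
Qed.

Lemma fiber_set (gT : finGroupType) (G P : {group gT}) g0 :
  P <| G -> g0 \in G -> [set g in G | coset P g == coset P g0] = P :* g0.
Proof.
move=> nPG Gg0; have nP := normal_norm nPG; have sP := normal_sub nPG.
have Ng : forall x, x \in G -> x \in 'N(P) by move=> x Gx; rewrite (subsetP nP).
apply/setP => g; rewrite inE; apply/andP/idP => [[Gg /eqP]|].
  by move/rcoset_kercosetP; apply; apply: Ng.
move=> gP; have Gg : g \in G.
  by move: gP; rewrite mem_rcoset => /(subsetP sP) h; rewrite -(mulgKV g0 g) groupM.
split=> //; apply/eqP; apply/rcoset_kercosetP => //; exact: Ng.
Qed.

Lemma fiber_sum_C (gT : finGroupType) (G P : {group gT}) (p : nat) h :
  p.-Sylow(G) P -> P <| G -> h \in 'C_G(P) -> p^'.-elt h ->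
  \sum_(g in G | coset P g == coset P h) #[g.`_p] = psi P.
Proof.
move=> sylP nPG /setIP[Gh cPh] ph.
rewrite (eq_bigl (mem [set g in G | coset P g == coset P h])); last first.
  by move=> g; rewrite !inE.
rewrite fiber_set // -rcosetE /rcoset big_imset /=; last first.
  by move=> x y _ _; apply: mulIg.
apply: eq_bigr => u Pu; rewrite consttM; last first.
  by apply/esym; apply: (centP cPh).
rewrite constt_p_elt ?(mem_p_elt (pHall_pgroup sylP)) //.
by move/constt1P: ph => ->; rewrite mulg1.
Qed.

Lemma small_or_gen (gT : finGroupType) (P : {group gT}) (p : nat) w :
  prime p -> p.-group P -> w \in P -> <[w]> = P \/ #[w] <= #|P| %/ p.
Proof.
move=> pp pP Pw; have := order_dvdG Pw; rewrite (card_pgroup pP).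
set a := logn p #|P|; case/(dvdn_pfactor _ _ pp) => c le_ca ow; rewrite ow.
have [ca | ne] := eqVneq c a.
  left; apply/eqP; rewrite eqEcard cycle_subG Pw /= -orderE ow ca.
  by rewrite (card_pgroup pP).
right; have lt : c < a by rewrite ltn_neqAle ne.
have -> : (p ^ a %/ p = p ^ a.-1)%N.
  by case: (a) lt => // a' _; rewrite expnS mulKn ?prime_gt0.
by rewrite leq_exp2l ?prime_gt1 //; case: (a) lt.
Qed.

Lemma fiber_bound (gT : finGroupType) (G P : {group gT}) (p : nat) g0 :
  prime p -> p.-Sylow(G) P -> P <| G -> cyclic P -> g0 \in G ->
  coset P g0 \notin 'C_G(P) / P ->
  \sum_(g in G | coset P g == coset P g0) #[g.`_p] <= #|P| * (#|P| %/ p).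
Proof.
move=> pp sylP nPG cP Gg0 nC.
have pP := pHall_pgroup sylP.
rewrite (eq_bigl (mem [set g in G | coset P g == coset P g0])); last first.
  by move=> g; rewrite !inE.
apply: (@leq_trans (\sum_(g in [set g in G | coset P g == coset P g0]) (#|P| %/ p))).
  2: by rewrite sum_nat_const fiber_set // card_rcoset.
apply: leq_sum => g.
rewrite !inE => /andP[Gg /eqP eqc].
have gpP : g.`_p \in P by rewrite (mem_normal_Hall sylP nPG) ?constt_mem ?p_elt_constt.
case: (small_or_gen pp pP gpP) => // gen.
case/negP: nC; rewrite -eqc mem_quotient // inE Gg /=.
rewrite -(consttC p g) groupM //.
  by apply: (subsetP (cyclic_abelian cP)).
suff : g.`_p^' \in 'C(<[g.`_p]>) by rewrite gen.
rewrite cent_cycle; apply/cent1P.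
by rewrite /constt; apply: commuteX2.
Qed.

Lemma psi_part (gT : finGroupType) (G P : {group gT}) (p : nat) :
  p.-Sylow(G) P -> P <| G ->
  psi G = (\sum_(Y in G / P) (\sum_(g in G | coset P g == Y) #[g.`_p]) * #[Y])%N.
Proof.
move=> sylP nPG; rewrite /psi.
rewrite (eq_bigr (fun g => (#[g.`_p] * #[coset P g])%N)); last first.
  by move=> g Gg; rewrite (order_split sylP nPG Gg).
rewrite (partition_big (coset P) (mem (G / P))) /=; last first.
  by move=> g Gg; rewrite mem_quotient.
apply: eq_bigr => Y _; rewrite big_distrl /=.
by apply: eq_bigr => g /andP[_ /eqP ->].
Qed.

Lemma decomp (gT : finGroupType) (G P : {group gT}) (p : nat) :
  prime p -> p.-Sylow(G) P -> P <| G -> cyclic P ->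
  (psi G <= psi P * (\sum_(Y in G / P | Y \in 'C_G(P) / P) #[Y])
           + (#|P| * (#|P| %/ p)) * (\sum_(Y in G / P | Y \notin 'C_G(P) / P) #[Y]))%N.
Proof.
move=> pp sylP nPG cP; rewrite (psi_part sylP nPG).
rewrite (bigID (fun Y => Y \in 'C_G(P) / P)) /= !big_distrr /=.
apply: leq_add.
  apply: eq_leq; apply: eq_bigr => Y /andP[_ CY].
  case/morphimP: CY => c Nc Cc ->.
  have Gc : c \in G by case/setIP: Cc.
  change (coset_morphism P c) with (coset P c).
  have Ch : c.`_p^' \in 'C_G(P) by exact: (@constt_mem _ ('C_G(P))%G).
  by rewrite {1}(coset_p' sylP nPG Gc) (fiber_sum_C sylP nPG Ch (p_elt_constt _ _)).
apply: leq_sum => Y /andP[GY nCY].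
case/morphimP: GY nCY => g0 Ng0 Gg0 -> nCY.
change (coset_morphism P g0) with (coset P g0) in nCY |- *.
by rewrite leq_mul2r; apply/orP; right; apply: fiber_bound.
Qed.

Lemma decomp_eq (gT : finGroupType) (G P : {group gT}) (p : nat) :
  p.-Sylow(G) P -> P <| G -> G \subset 'C(P) -> psi G = (psi P * psi (G / P))%N.
Proof.
move=> sylP nPG cGP; rewrite (psi_part sylP nPG) /psi big_distrr /=.
apply: eq_bigr => Y GY; case/morphimP: GY => g0 Ng0 Gg0 ->.
have Gh : g0.`_p^' \in 'C_G(P).
  by rewrite inE constt_mem //= (subsetP cGP) // constt_mem.
change (coset_morphism P g0) with (coset P g0).
by rewrite {1}(coset_p' sylP nPG Gg0) (fiber_sum_C sylP nPG Gh (p_elt_constt _ _)) mulnC.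
Qed.

Lemma card_quo_Syl (gT : finGroupType) (G P : {group gT}) (p : nat) :
  p.-Sylow(G) P -> P <| G -> #|G / P| = (#|G|`_p^')%N.
Proof.
move=> sylP nPG; rewrite card_quotient ?normal_norm //.
apply/eqP; rewrite -(eqn_pmul2l (part_gt0 p #|G|)) -(card_Hall sylP).
by rewrite Lagrange ?(pHall_sub sylP) // (card_Hall sylP) partnC.
Qed.

Lemma psiC_mul (n p : nat) : 0 < n -> prime p ->
  psiC n = (psiC (n`_p) * psiC (n`_p^'))%N.
Proof.
move=> n0 pp; have [P sylP] := Sylow_exists p (Zp n).
have aQ : abelian (Zp n) by apply: cyclic_abelian; apply: Zp_cyc.
have sPQ := pHall_sub sylP.
have nPQ : P <| Zp n by rewrite -sub_abelian_normal.
have cQP : Zp n \subset 'C(P) by apply: sub_abelian_cent.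
have := decomp_eq sylP nPQ cQP.
rewrite psi_cyclic ?Zp_cyc // psi_cyclic ?(cyclicS sPQ) ?Zp_cyc //.
rewrite psi_cyclic ?quotient_cyclic ?Zp_cyc //.
by rewrite (card_quo_Syl sylP nPQ) (card_Hall sylP) card_Zp.
Qed.

Lemma psiC_pow (r b : nat) : prime r -> 0 < b ->
  psiC (r ^ b) = (psiC (r ^ b.-1) + (r ^ b - r ^ b.-1) * r ^ b)%N.
Proof.
move=> pr b0; have rb0 : 0 < r ^ b by rewrite expn_gt0 prime_gt0.
have [a defQ] := cyclicP (Zp_cyc (r ^ b)).
have oa : #[a] = (r ^ b)%N by rewrite orderE -defQ card_Zp.
have rdiv : r %| #[a] by rewrite oa; case: (b) b0 => // b' _; rewrite expnS dvdn_mulr.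
set K := <[a ^+ r]>.
have oK : #|K| = (r ^ b.-1)%N.
  rewrite -orderE orderXdiv // oa; case: (b) b0 => // b' _.
  by rewrite expnS mulKn ?prime_gt0.
have sKQ : K \subset Zp (r ^ b) by rewrite defQ cycleX.
rewrite -[in psiC (r ^ b.-1)]oK -(psi_cyclic (cycle_cyclic _)) -/K.
rewrite /psiC /psi (bigID (mem K)) /=.
congr (_ + _)%N.
  apply: eq_bigl => x.
  by apply/andP/idP => [[]//|Kx]; split=> //; apply: (subsetP sKQ).
rewrite (eq_bigr (fun _ => (r ^ b)%N)); last first.
  move=> x /andP[Qx nKx].
  have := order_dvdG Qx; rewrite card_Zp // => /(dvdn_pfactor _ _ pr)[c le_cb oc].
  rewrite oc; congr (r ^ _)%N.
  apply/eqP; apply: contraR nKx => ne.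
  rewrite -cycle_subG -(cardSg_cyclic (Zp_cyc (r ^ b))) ?cycle_subG //.
  rewrite -orderE oc oK; apply/(dvdn_pfactor _ _ pr); exists c => //.
  by move: le_cb ne; case: (b) => [|b'] /= le ne'; lia.
  by apply: (subsetP sKQ); exact: cycle_id.
transitivity (\sum_(i in Zp (r ^ b) :\: K) r ^ b)%N.
  by apply: eq_bigl => x; rewrite !inE andbC.
rewrite sum_nat_const; congr (_ * _)%N.
by rewrite cardsD (setIidPr sKQ) oK card_Zp.
Qed.

Open Scope nat_scope.

Lemma psi_ge1 (gT : finGroupType) (G : {group gT}) : 1 <= psi G.
Proof. by rewrite /psi (bigD1 1%g) ?group1 //= order1 leq_addr. Qed.

Lemma psiC_gt0 n : 0 < psiC n.
Proof. exact: psi_ge1. Qed.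

Lemma psiC_le_sq n : 0 < n -> psiC n <= n * n.
Proof. by move=> n0; have := psi_le_sq (Zp_group n); rewrite card_Zp. Qed.

Lemma psiC_dvd d m : 0 < m -> d %| m -> psiC d <= psiC m.
Proof.
move=> m0 dm; have [a defQ] := cyclicP (Zp_cyc m).
have oa : #[a] = m by rewrite orderE -defQ card_Zp.
have kd : m %/ d %| #[a] by rewrite oa dvdn_div.
have d0 : 0 < d by apply: dvdn_gt0 dm.
have k0 : 0 < m %/ d by rewrite divn_gt0 // dvdn_leq.
have ok : #[a ^+ (m %/ d)] = d.
  by rewrite orderXdiv // oa -{1}(divnK dm) mulKn.
have sub : <[a ^+ (m %/ d)]> \subset Zp m by rewrite defQ cycleX.
rewrite -ok orderE -psi_cyclic ?cycle_cyclic // /psiC psi_sub //.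
Qed.

Lemma psiC_pow_ge (r b : nat) : prime r -> 0 < b ->
  (r * r - r + 1) * psiC (r ^ b.-1) <= psiC (r ^ b).
Proof.
move=> pr b0; have := psiC_pow pr b0.
have t0 : 0 < r ^ b.-1 by rewrite expn_gt0 prime_gt0.
have hS := psiC_le_sq t0.
have -> : (r ^ b = r * r ^ b.-1)%N by case: (b) b0 => // b' _; rewrite expnS.
move: hS; set S := psiC (r ^ b.-1); set t := r ^ b.-1 => hS ->.
have e : (r * t - t = (r - 1) * t)%N by rewrite mulnBl mul1n.
have e2 : (r * r - r = (r - 1) * r)%N by rewrite mulnBl mul1n.
rewrite e e2; move: (r - 1) => u.
have h : u * r * S <= u * r * (t * t) by rewrite leq_mul2l hS orbT.
nia.
Qed.

Lemma psiC_pow_lb (r b : nat) : prime r -> 0 < b ->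
  (r - 1) * (r ^ b * r ^ b.-1) + 1 <= psiC (r ^ b).
Proof.
move=> pr b0; have := psiC_pow pr b0.
have h1 := psiC_gt0 (r ^ b.-1).
have -> : (r ^ b = r * r ^ b.-1)%N by case: (b) b0 => // b' _; rewrite expnS.
move: h1; set S := psiC (r ^ b.-1); set t := r ^ b.-1 => h1 ->.
have e : (r * t - t = (r - 1) * t)%N by rewrite mulnBl mul1n.
rewrite e; nia.
Qed.

Lemma psiC_sub_ge q m m' : 0 < m -> m' %| m -> m' != m ->
  (forall r, prime r -> r %| m -> q <= r) ->
  (q * q - q + 1) * psiC m' <= psiC m.
Proof.
move=> m0 dm ne hq.
have m'0 : 0 < m' by apply: dvdn_gt0 dm.
set k := m %/ m'.
have ek : m = k * m' by rewrite divnK.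
have k0 : 0 < k by rewrite divn_gt0 // dvdn_leq.
have k1 : 1 < k.
  case: (ltnP 1 k) => // hk; have ek1 : k = 1 by lia.
  by case/negP: ne; rewrite ek ek1 mul1n.
set r := pdiv k; have pr : prime r by exact: pdiv_prime.
have rk : r %| k by exact: pdiv_dvd.
have rm : r %| m by rewrite ek dvdn_mulr.
set m1 := m %/ r.
have em : m = r * m1 by rewrite mulnC divnK.
have m10 : 0 < m1 by rewrite divn_gt0 ?prime_gt0 // dvdn_leq.
have dm1 : m' %| m1.
  by rewrite /m1 dvdn_divRL // ek mulnC dvdn_mul.
have h1 := psiC_dvd m10 dm1.
have qr : q <= r by apply: hq.
rewrite (psiC_mul m10 pr) in h1.
have e1 : m`_r = r * m1`_r.
  by rewrite em (partnM _ (prime_gt0 pr) m10) (@part_pnat_id r r) ?pnat_id.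
have e2 : m`_r^' = m1`_r^'.
  rewrite em (partnM _ (prime_gt0 pr) m10) (@part_p'nat r^' r) ?mul1n //.
  by rewrite pnatNK pnat_id.
rewrite (psiC_mul m0 pr) e1 e2 p_part -expnS.
have hpow : (r * r - r + 1) * psiC (r ^ logn r m1) <= psiC (r ^ (logn r m1).+1)
  := psiC_pow_ge pr (isT : 0 < (logn r m1).+1).
rewrite p_part in h1.
have hq2 : q * q - q + 1 <= r * r - r + 1.
  have : q * q - q = (q - 1) * q by rewrite mulnBl mul1n.
  have : r * r - r = (r - 1) * r by rewrite mulnBl mul1n.
  by move=> -> ->; rewrite leq_add2r leq_mul ?leq_sub2r.
set A := psiC (r ^ logn r m1) in h1 hpow *.
set B := psiC (m1`_r^') in h1 *.
set C := psiC m' in h1 *.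
set D := psiC (r ^ (logn r m1).+1) in hpow *.
move: (q * q - q + 1) (r * r - r + 1) hq2 hpow => a b hab hpow.
apply: (@leq_trans (a * (A * B))); first by rewrite leq_mul2l h1 orbT.
apply: (@leq_trans (b * A * B)); first by rewrite mulnA leq_mul2r leq_mul2r hab !orbT.
by rewrite leq_mul2r hpow orbT.
Qed.

Lemma le_max_pdiv r n : 0 < n -> prime r -> r %| n -> r <= max_pdiv n.
Proof. by move=> n0 pr rn; apply: max_pdiv_max; rewrite mem_primes pr n0 rn. Qed.

Lemma totient_bound n : 0 < n -> n * (pdiv n).-1 <= max_pdiv n * totient n.
Proof.
elim/ltn_ind: n => n IH n0.
have [n1 | n1] := leqP n 1.
  by have -> : n = 1 by lia.
set p := max_pdiv n; have pp : prime p by exact: max_pdiv_prime.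
have pn : p %| n by exact: max_pdiv_dvd.
set m := n`_p^'.
have en : n = n`_p * m by rewrite partnC.
set b := logn p n.
have b0 : 0 < b by rewrite logn_gt0 mem_primes pp n0 pn.
have enp : n`_p = p ^ b by rewrite p_part.
have m0 : 0 < m by exact: part_gt0.
have tn : totient n = (p.-1 * p ^ b.-1) * totient m.
  by rewrite {1}en totient_coprime ?coprime_partC // enp totient_pfactor.
have pb : p ^ b = p * p ^ b.-1 by case: (b) b0 => // b' _; rewrite expnS.
rewrite tn.
have [m1 | m1] := leqP m 1.
  have em : m = 1 by lia.
  have -> : pdiv n = p by rewrite en em muln1 enp; case: (b) b0 => // b' _; rewrite pdiv_pfactor.
  rewrite {1}en em muln1 enp pb; have -> : totient 1 = 1 by [].
  by rewrite muln1 -mulnA [p ^ b.-1 * _]mulnC.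
have mn : m < n.
  rewrite en -{1}[m]mul1n ltn_mul2r m0 /= enp pb.
  by apply: leq_trans (prime_gt1 pp) _; rewrite leq_pmulr ?expn_gt0 ?prime_gt0.
have IHm := IH m mn m0.
have mdn : m %| n by rewrite en dvdn_mull.
have qle : pdiv n <= pdiv m.
  by apply: pdiv_min_dvd; [rewrite prime_gt1 ?pdiv_prime | apply: dvdn_trans (pdiv_dvd m) mdn].
have pm' : ~~ (p %| m).
  by rewrite -p'natE // /m part_pnat.
have mpm : max_pdiv m < p.
  rewrite ltn_neqAle; apply/andP; split.
    apply/negP => /eqP e; case/negP: pm'; rewrite -e; exact: max_pdiv_dvd.
  apply: le_max_pdiv => //; first by rewrite max_pdiv_prime.
  by apply: dvdn_trans (max_pdiv_dvd m) mdn.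
rewrite {1}en enp pb.
have h1 : (pdiv n).-1 <= (pdiv m).-1 by rewrite -!subn1 leq_sub2r.
have h2 : max_pdiv m <= p.-1 by rewrite -ltnS prednK ?prime_gt0.
move: IHm; set Q := pdiv n; set Q' := pdiv m; set M := max_pdiv m; set T := totient m.
set t := p ^ b.-1 => IHm.
have : m * Q.-1 <= M * T by apply: leq_trans IHm; rewrite leq_mul2l h1 orbT.
move=> h3.
have h4 : M * T <= p.-1 * T by rewrite leq_mul2r h2 orbT.
have h5 : m * Q.-1 <= p.-1 * T by apply: leq_trans h4.
have : p * t * m * Q.-1 <= p * t * (p.-1 * T) by rewrite -mulnA leq_mul2l h5 orbT.
by rewrite !mulnA; move=> h; apply: leq_trans h _; rewrite -[p * t * p.-1]mulnAC -[p * p.-1 * t]mulnA.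
Qed.

Lemma cent_case (gT : finGroupType) (G P : {group gT}) (p : nat) :
  p.-Sylow(G) P -> P <| G -> cyclic P -> cyclic (G / P) -> G \subset 'C(P) ->
  cyclic G.
Proof.
move=> sylP nPG cP cQ cGP.
have [Y defQ] := cyclicP cQ.
have GY : Y \in G / P by rewrite defQ cycle_id.
case/morphimP: GY => y Ny Gy eY.
set h := y.`_p^'.
have Gh : h \in G by exact: constt_mem.
have ch : coset P y = coset P h := coset_p' sylP nPG Gy.
have oh : #[h] = (#|G|`_p^')%N.
  rewrite -(order_coset_p' sylP nPG Gh (p_elt_constt _ _)) -ch.
  by rewrite -(card_quo_Syl sylP nPG) defQ orderE eY.
have sPhG : (P * <[h]> \subset G)%g.
  by rewrite mulG_subG (pHall_sub sylP) cycle_subG.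
have cardM : #|(P * <[h]>)%g| = #|G|.
  rewrite TI_cardMg; last first.
    by apply: coprime_TIg; rewrite (card_Hall sylP) -orderE oh coprime_partC.
  by rewrite (card_Hall sylP) -orderE oh partnC.
have eG : (P * <[h]>)%g = G.
  by apply/eqP; rewrite eqEcard sPhG cardM leqnn.
rewrite -eG cyclicM ?cycle_cyclic //.
  by apply: subset_trans cGP; rewrite cycle_subG.
by rewrite (card_Hall sylP) -orderE oh coprime_partC.
Qed.

Lemma big_elt_syl (gT : finGroupType) (G : {group gT}) x (p : nat) :
  prime p -> x \in G -> #|G| < #[x] * p ->
  p.-Sylow(G) <[x.`_p]> /\ <[x.`_p]> <| G.
Proof.
move=> pp Gx hx.
set k := #|G : <[x]>|.
have sxG : <[x]> \subset G by rewrite cycle_subG.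
have ek : #|G| = #[x] * k by rewrite -(Lagrange sxG) orderE.
have k0 : 0 < k by exact: indexg_gt0.
have kp : k < p by rewrite -(ltn_pmul2l (order_gt0 x)) -ek.
have np : #|G|`_p = #[x]`_p.
  rewrite ek partnM ?order_gt0 // (@part_p'nat p k) ?muln1 //.
  by rewrite p'natE // gtnNdvd.
have sylP : p.-Sylow(G) <[x.`_p]>.
  by rewrite pHallE cycle_subG constt_mem //= -orderE order_constt np.
split=> //.
have sPx : <[x.`_p]> \subset <[x]> by rewrite cycle_subG cycle_constt.
have sxN : <[x]> \subset 'N_G(<[x.`_p]>).
  by rewrite subsetI cycle_subG Gx /= sub_abelian_norm ?cycle_abelian.
have hS : #|'Syl_p(G)| %| k by rewrite (card_Syl sylP) indexgS.
have hS1 : #|'Syl_p(G)| = 1.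
  have := card_Syl_mod G pp; rewrite modn_small //.
  by apply: leq_ltn_trans kp; apply: dvdn_leq.
move: hS1; rewrite (card_Syl sylP) => /eqP; rewrite indexg_eq1 => sGN.
rewrite /normal (pHall_sub sylP) /=; apply: subset_trans sGN _; exact: subsetIr.
Qed.
Lemma arith_b q p Ps X A B psiG : 2 <= q -> q < p -> psiG <= Ps * A + X * B ->
  (p - 1) * X + 1 <= Ps -> (q * q - q + 1) * A <= A + B -> 0 < A + B ->
  (q - 1) * psiG < Ps * (A + B).
Proof.
move=> q2 qp hG hPs hAB hpos.
have [w ew] : exists w, q = w.+2 by exists q.-2; lia.
have [v ev] : exists v, p = v.+1 by exists p.-1; lia.
subst q p; rewrite subn1 /= in hPs; rewrite subn1 /=.
have hq : w.+2 * w.+2 - w.+2 = w.+2 * w.+1 by rewrite mulnS mulnC addnC addnK.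
rewrite hq in hAB.
have hB : w.+2 * w.+1 * A <= B by lia.
set D := B - w * A.
have eD : B = w * A + D.
  rewrite subnKC //; apply: leq_trans hB; rewrite leq_mul2r; apply/orP; right; nia.
have hD : (w.+1 * w.+1 + 1) * A <= D.
  have : w.+2 * w.+1 * A <= w * A + D by rewrite -eD.
  nia.
have D1 : 1 <= D.
  case: (posnP A) => [A0|Apos]; last by apply: leq_trans hD; rewrite muln_gt0 addn1 Apos.
  by move: hpos; rewrite eD A0 muln0.
have h1 : (v * X + 1) * D <= Ps * D by rewrite leq_mul2r hPs orbT.
have h2 : X * ((w.+1 * w.+1 + 1) * A) <= X * D by rewrite leq_mul2l hD orbT.
have h4 : w.+1 * psiG <= w.+1 * (Ps * A + X * B) by rewrite leq_mul2l hG orbT.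
apply: (leq_trans _ (_ : w.+1 * (Ps * A + X * B) < _)); first by [].
rewrite eD.
move: h1 h2 D1 qp; clear; move=> h1 h2 D1 qp.
nia.
Qed.

Lemma main_nat n : forall (gT : finGroupType) (G : {group gT}),
  #|G| = n -> ~~ cyclic G -> (pdiv n).-1 * psi G < psiC n.
Proof.
elim/ltn_ind: n => n IH gT G cardG ncG.
have n0 : 0 < n by rewrite -cardG cardG_gt0.
have n1 : 1 < n.
  case: (ltnP 1 n) => // hn; case/negP: ncG.
  by rewrite (card_le1_trivg (_ : #|G| <= 1)) ?cyclic1 // cardG.
set p := max_pdiv n; have pp : prime p by exact: max_pdiv_prime.
set q := pdiv n; have pq : prime q by exact: pdiv_prime.
have pn : p %| n by exact: max_pdiv_dvd.
case: (boolP [exists x in G, n < #[x] * p]) => [/exists_inP[x Gx hx] | hno].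
  have hx' : #|G| < #[x] * p by rewrite cardG.
  have [sylP nPG] := big_elt_syl pp Gx hx'.
  move: sylP nPG; set P := <[x.`_p]>%G => sylP nPG.
  have cP : cyclic P by exact: cycle_cyclic.
  have cardP : #|P| = n`_p by rewrite (card_Hall sylP) cardG.
  set m := #|G / P|.
  have em : m = n`_p^' by rewrite /m (card_quo_Syl sylP nPG) cardG.
  have m0 : 0 < m by rewrite em part_gt0.
  have b0 : 0 < logn p n by rewrite logn_gt0 mem_primes pp n0 pn.
  have enp : n`_p = p ^ logn p n by rewrite p_part.
  have m1 : 1 < m.
    case: (ltnP 1 m) => // hm; case/negP: ncG.
    have em1 : m = 1 by lia.
    have eP : P :=: G.
      apply/eqP; rewrite eqEcard (pHall_sub sylP) cardG cardP.
      by rewrite /= -[n in n <= _](partnC p n0) -em em1 muln1.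
    by rewrite -eP.
  have psiP : psi P = psiC (n`_p) by rewrite psi_cyclic // cardP.
  have psiCn : psiC n = psiC (n`_p) * psiC m by rewrite em; exact: psiC_mul.
  have mdn : m %| n by rewrite em -{2}(partnC p n0) dvdn_mull.
  have hqr : forall r, prime r -> r %| m -> q <= r.
    move=> r pr rm; apply: pdiv_min_dvd; first exact: prime_gt1.
    exact: dvdn_trans rm mdn.
  have pm' : ~~ (p %| m) by rewrite em -p'natE // part_pnat.
  have qm : q <= pdiv m by apply: hqr; [exact: pdiv_prime | exact: pdiv_dvd].
  have qp : q < p.
    apply: leq_ltn_trans qm _; rewrite ltn_neqAle; apply/andP; split.
      by apply/negP => /eqP e; case/negP: pm'; rewrite -e pdiv_dvd.
    apply: le_max_pdiv => //; first exact: pdiv_prime.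
    exact: dvdn_trans (pdiv_dvd m) mdn.
  have hdec := decomp pp sylP nPG cP.
  move: hdec; set A := \sum_(Y in G / P | Y \in 'C_G(P) / P) #[Y].
  set B := \sum_(Y in G / P | Y \notin 'C_G(P) / P) #[Y].
  set X := #|P| * (#|P| %/ p) => hdec.
  have hAB : psi (G / P) = A + B by rewrite /psi (bigID (fun Y => Y \in 'C_G(P) / P)).
  have hPs : (p - 1) * X + 1 <= psi P.
    rewrite psiP /X cardP enp.
    have -> : p ^ logn p n %/ p = p ^ (logn p n).-1.
      by case: (logn p n) b0 => // b _; rewrite expnS mulKn ?prime_gt0.
    exact: psiC_pow_lb.
  have Pgt0 : 0 < psi P by apply: psi_ge1.
  case: (boolP (cyclic (G / P))) => [cQ | ncQ].
    have nGC : ~~ (G \subset 'C(P)).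
      by apply/negP => cGP; case/negP: ncG; apply: (cent_case sylP nPG cP cQ cGP).
    have sCG : 'C_G(P) / P \subset G / P by apply: quotientS; exact: subsetIl.
    have eA : A = psi ('C_G(P) / P).
      rewrite /A /psi; apply: eq_bigl => Y; apply/andP/idP => [[]//|CY]; split=> //.
      exact: (subsetP sCG).
    have cCQ : cyclic ('C_G(P) / P) by apply: cyclicS cQ.
    have dC : #|'C_G(P) / P| %| m by apply: cardSg.
    have neC : #|'C_G(P) / P| != m.
      apply/negP => /eqP e; case/negP: nGC.
      have eQ : 'C_G(P) / P = G / P by apply/eqP; rewrite eqEcard sCG e leqnn.
      have sPC : P \subset 'C_G(P).
        by rewrite subsetI (pHall_sub sylP) /=; exact: cyclic_abelian cP.
      have : G / P \subset 'C_G(P) / P by rewrite eQ.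
      rewrite quotientSGK ?normal_norm ?sPC //.
      by move=> h; apply: subset_trans h _; exact: subsetIr.
    have hsub := psiC_sub_ge m0 dC neC hqr.
    rewrite -(psi_cyclic cCQ) -eA in hsub.
    have hAB' : (q * q - q + 1) * A <= A + B.
      by rewrite -hAB (psi_cyclic cQ).
    have hpos : 0 < A + B by rewrite -hAB psi_ge1.
    have := arith_b (prime_gt1 pq) qp hdec hPs hAB' hpos.
    by rewrite -hAB (psi_cyclic cQ) -/m psiP -psiCn subn1.
  have mn : m < n.
    rewrite em -{2}(partnC p n0) -{1}[n`_p^']mul1n ltn_mul2r part_gt0 /= enp.
    by rewrite -{1}(expn0 p) ltn_exp2l ?prime_gt1.
  have IHm := IH m mn _ (G / P)%G erefl ncQ.
  have XP : X <= psi P.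
    apply: leq_trans hPs; apply: leq_trans (leq_addr _ _); apply: leq_pmull.
    by rewrite subn_gt0 prime_gt1.
  have hG : psi G <= psi P * psi (G / P).
    by rewrite hAB mulnDr; apply: leq_trans hdec _; rewrite leq_add2l leq_mul2r XP orbT.
  have hq1 : q.-1 <= (pdiv m).-1 by rewrite -!subn1 leq_sub2r.
  rewrite psiCn -psiP.
  apply: (@leq_ltn_trans (psi P * ((pdiv m).-1 * psi (G / P)))).
    apply: leq_trans (leq_mul (leqnn q.-1) hG) _.
    by rewrite mulnCA leq_mul2l leq_mul2r hq1 !orbT.
  by rewrite ltn_pmul2l.
have hall : forall x, x \in G -> #[x] * p <= n.
  move=> x Gx; rewrite leqNgt; apply/negP => h; case/negP: hno.
  by apply/exists_inP; exists x.
have hsum : psi G * p <= n * n.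
  rewrite /psi big_distrl /=; apply: (@leq_trans (\sum_(x in G) n)).
    by apply: leq_sum => x Gx; exact: hall.
  by rewrite sum_nat_const cardG.
have ht := totient_bound n0.
have hg : n * totient n < psiC n.
  by have := psi_gen (Zp_cyc n); rewrite card_Zp // => ->.
rewrite -(ltn_pmul2l (prime_gt0 pp)).
fold p q in ht.
nia.
Qed.


Import GRing.Theory Num.Theory.

Theorem theorem3 (gT : finGroupType) (G : {group gT}) :
  ~~ cyclic G ->
  ((psi G)%:R < (1 / ((pdiv #|G|)%:R - 1)) * (psiC #|G|)%:R :> rat)%R.
Proof.
move=> ncG; have h := main_nat erefl ncG.
have n1 : 1 < #|G|.
  case: (ltnP 1 #|G|) => // hn; case/negP: ncG.
  by rewrite (card_le1_trivg hn) cyclic1.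
have q1 : 1 < pdiv #|G| by apply: prime_gt1; apply: pdiv_prime.
have c0 : (0 < (pdiv #|G|)%:R - 1 :> rat)%R.
  by rewrite subr_gt0 ltr1n.
rewrite div1r mulrC ltr_pdivlMr // -(natrB _ (ltnW q1)) -natrM ltr_nat.
by rewrite mulnC subn1.
Qed.
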